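(* Let $F$ be a random variable with $0\le F\le M$ for some $M>0$, and suppose $\mathbb{E}[F]\le2e^{-M}$. Then $\mathbb{E}[e^F]\le1+\sqrt{8e^M\mathbb{E}[F]}$. *)

(* Defs.v *)
From HB Require Import structures.
From mathcomp Require Import all_boot all_order all_algebra.
From mathcomp Require Import all_classical all_reals all_analysis.

(* Main.v *)
Require Import Defs.
From HB Require Import structures.
From mathcomp Require Import all_boot all_order all_algebra.
From mathcomp Require Import all_classical all_reals all_analysis.
From mathcomp Require Import ring lra.
Import Order.TTheory GRing.Theory Num.Theory.
Local Open Scope ring_scope.
Local Open Scope ereal_scope.

Theorem lemma8 (d : measure_display) (T : measurableType d) (R : realType)
  (P : probability T R) (F : {RV P >-> R}) (M : R)
  (hM : (0 < M)%R)
  (hF : forall x, (0 <= F x <= M)%R)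
  (hE : 'E_P[F] <= (2 * expR (- M))%:E) :
  'E_P[fun x => expR (F x)] <= (1 + Num.sqrt (8 * expR M * fine 'E_P[F]))%:E.
Proof.
have mF : measurable_fun setT F by [].
have mexp : measurable_fun setT (fun x => expR (F x)).
  exact: (measurableT_comp (@measurable_realfun.measurable_expR R) mF).
have mG : measurable_fun setT (fun x => 1 + expR M * F x)%R.
  apply: measurable_realfun.measurable_funD; first exact: measurable_cst.
  exact: measurable_realfun.measurable_funM (measurable_cst _) mF.
have pt : forall x, (expR (F x) <= 1 + expR M * F x)%R.
  move=> x; have /andP[h0 h1] := hF x.
  have e1 := expR_ge1Dx (- F x).
  have e2 : (expR (- F x) * expR (F x) = 1)%R by rewrite -expRD addNr expR0.
  have e3 : (expR (F x) <= expR M)%R by rewrite ler_expR.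
  have e4 : (0 < expR (F x))%R by apply: expR_gt0.
  nra.
have h1 : 'E_P[fun x => expR (F x)] <= 'E_P[fun x => 1 + expR M * F x]%R.
  apply: expectation_le => //.
  - move=> x; have /andP[h0 _] := hF x.
    have := expR_gt0 M; nra.
  - by apply: aeW => x; exact: pt.
have EF0 : 0 <= 'E_P[F].
  rewrite expectation_def; apply: integral_ge0 => x _.
  by rewrite lee_fin; case/andP: (hF x).
have EFfin : 'E_P[F] = (fine 'E_P[F])%:E.
  by rewrite fineK // ge0_fin_numE // (le_lt_trans hE) // ltry.
set m := fine 'E_P[F].
have m0 : (0 <= m)%R by rewrite -lee_fin -EFfin.
have m2 : (m <= 2 * expR (- M))%R by rewrite -lee_fin -EFfin.
have h2 : 'E_P[fun x => 1 + expR M * F x]%R = (1 + expR M * m)%:E.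
  rewrite expectation.unlock.
  under eq_integral do rewrite EFinD EFinM.
  rewrite ge0_integralD //=; last 2 first.
  - move=> x _; rewrite -EFinM lee_fin; case/andP: (hF x) => h0 _.
    by apply: mulr_ge0 => //; exact: expR_ge0.
  - apply/measurable_realfun.measurable_EFinP.
    exact: measurable_realfun.measurable_funM (measurable_cst _) mF.
  have -> : \int[P]_(x in setT) (1%R)%:E = 1.
    by rewrite integral_cst //= probability_setT mul1e.
  rewrite ge0_integralZl //=.
  - by rewrite -expectation_def EFfin.
  - by apply/measurable_realfun.measurable_EFinP.
  - by move=> x _; rewrite lee_fin; case/andP: (hF x).
apply: (le_trans h1); rewrite h2 lee_fin lerD2l.
set a := (expR M * m)%R.
have a0 : (0 <= a)%R by apply: mulr_ge0 => //; exact: expR_ge0.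
have a2 : (a <= 2)%R.
  have e : (expR M * expR (- M) = 1)%R by rewrite -expRD subrr expR0.
  have := expR_gt0 M; rewrite /a; nra.
have -> : (8 * expR M * m = 8 * a)%R by rewrite /a mulrA.
have s0 := sqrtr_ge0 (8 * a)%R.
have s2 := @sqr_sqrtr _ (8 * a)%R (ltac:(nra)).
nra.
Qed.
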